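(* Let $\mathbb{U}\subseteq\mathbb{R}^{n_u}$ with positive Lebesgue measure, and let $\beta,\gamma\in\mathbb{R}\setminus\{0\}$ with $\beta<\gamma$. (i) Let $g:\mathbb{U}\to\mathbb{R}$ be bounded below with $\int_{\mathbb{U}}\exp(\beta g(u))\,du<\infty$ and $\int_{\mathbb{U}}\exp(-(\gamma-\beta)g(u))\,du<\infty$. Then $$\frac{1}{\beta}\log\int_{\mathbb{U}}\exp(\beta g(u))\,du=\inf_{\rho\in L^{1-\frac{\gamma}{\gamma-\beta}}(\mathbb{U})}\Big\{\frac{1}{\gamma}\log\int_{\mathbb{U}}\exp(\gamma g(u))\rho(u)\,du-\frac{1}{\gamma-\beta}\mathcal{H}_{1-\frac{\gamma}{\gamma-\beta}}(\rho)\Big\},$$ and the unique minimizer of the right-hand side is $\rho(u)=\exp(-(\gamma-\beta)g(u))/\int_{\mathbb{U}}\exp(-(\gamma-\beta)g(u'))\,du'$, $u\in\mathbb{U}$. (ii) Let $h:\mathbb{U}\to\mathbb{R}$ be bounded above with $\int_{\mathbb{U}}\exp(\gamma h(u))\,du<\infty$ and $\int_{\mathbb{U}}\exp((\gamma-\beta)h(u))\,du<\infty$. Then $$\frac{1}{\gamma}\log\int_{\mathbb{U}}\exp(\gamma h(u))\,du=\sup_{\rho\in L^{\frac{\gamma}{\gamma-\beta}}(\mathbb{U})}\Big\{\frac{1}{\beta}\log\int_{\mathbb{U}}\exp(\beta h(u))\rho(u)\,du+\frac{1}{\gamma-\beta}\mathcal{H}_{\frac{\gamma}{\gamma-\beta}}(\rho)\Big\},$$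 and the unique maximizer of the right-hand side is $\rho(u)=\exp((\gamma-\beta)h(u))/\int_{\mathbb{U}}\exp((\gamma-\beta)h(u'))\,du'$, $u\in\mathbb{U}$.
   Context: For a probability density $p$ on $\mathbb{U}$ and $\alpha\in\mathbb{R}\setminus\{0,1\}$ (including $\alpha<0$), the R\'enyi entropy is $\mathcal{H}_\alpha(p)=\frac{1}{\alpha(1-\alpha)}\log\int_{\{u:p(u)>0\}}p(u)^\alpha\,du$. For $\alpha\in\mathbb{R}\setminus\{0,1\}$, $L^{\alpha}(\mathbb{U})=\{\rho$ probability density on $\mathbb{U}:\int_{\mathbb{U}}\rho(u)^{\alpha}du<\infty\}$. *)

(* Defs.v *)
From HB Require Import structures.
From mathcomp Require Import all_boot all_order all_algebra.
From mathcomp Require Import all_classical all_reals all_analysis.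
Set Implicit Arguments. Unset Strict Implicit. Unset Printing Implicit Defensive.
Import Order.TTheory GRing.Theory Num.Theory.
Import numFieldNormedType.Exports.
Local Open Scope classical_set_scope.
Local Open Scope ring_scope.

Section Renyi.
Context (R : realType) (d : measure_display) (T : measurableType d)
  (mu : {measure set T -> \bar R}) (U : set T).

(* r^a in the extended reals, with the convention 0^a = +oo for a < 0
   and 0^a = 0 for a > 0 (only used for r >= 0, a <> 0) *)
Definition epow (r a : R) : \bar R :=
  if 0 < r then (r `^ a)%:E else if a < 0 then +oo%E else 0%E.

Definition is_density (rho : T -> R) : Prop :=
  [/\ measurable_fun U rho,
      (forall u, U u -> 0 <= rho u) &
      (\int[mu]_(x in U) (rho x)%:E = 1)%E].

Definition Lalpha (a : R) : set (T -> R) :=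
  [set rho | is_density rho /\ (\int[mu]_(x in U) epow (rho x) a < +oo)%E].

Definition renyi (a : R) (p : T -> R) : \bar R :=
  ((a * (1 - a))^-1)%:E *
  lne (\int[mu]_(x in U `&` [set u | (0 < p u)%R]) ((p x) `^ a)%:E).

End Renyi.

(* Main.v *)
Require Import Defs.
From HB Require Import structures.
From mathcomp Require Import all_boot all_order all_algebra.
From mathcomp Require Import all_classical all_reals all_analysis.
From mathcomp Require Import ring lra.
Import Order.TTheory GRing.Theory Num.Theory.
Import numFieldNormedType.Exports.
Import measurable_realfun.
Local Open Scope classical_set_scope.
Local Open Scope ring_scope.
Section Scalar.
Context {R : realType}.

Lemma amgm_le (t u v : R) : 0 < t < 1 ->
  expR (t * u + (1 - t) * v) <= t * expR u + (1 - t) * expR v.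
Proof.
move=> /andP[t0 t1].
set G := expR (t * u + (1 - t) * v).
have hu : expR u = G * expR ((1 - t) * (u - v)).
  by rewrite /G -expRD; congr expR; ring.
have hv : expR v = G * expR (- (t * (u - v))).
  by rewrite /G -expRD; congr expR; ring.
have G0 : 0 < G by exact: expR_gt0.
have e1 := expR_ge1Dx ((1 - t) * (u - v)).
have e2 := expR_ge1Dx (- (t * (u - v))).
rewrite hu hv.
have h1 : G * (1 + (1 - t) * (u - v)) <= G * expR ((1 - t) * (u - v)) by rewrite ler_pM2l.
have h2 : G * (1 + - (t * (u - v))) <= G * expR (- (t * (u - v))) by rewrite ler_pM2l.
have t0' : 0 <= t by exact: ltW.
have t1' : 0 <= 1 - t by rewrite subr_ge0 ltW.
have := ler_wpM2l t0' h1; have := ler_wpM2l t1' h2.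
move=> a b; apply: le_trans (lerD b a).
rewrite le_eqVlt; apply/orP; left; apply/eqP; ring.
Qed.

Lemma amgm_lt (t u v : R) : 0 < t < 1 -> u != v ->
  expR (t * u + (1 - t) * v) < t * expR u + (1 - t) * expR v.
Proof.
move=> /andP[t0 t1] uv.
set G := expR (t * u + (1 - t) * v).
have hu : expR u = G * expR ((1 - t) * (u - v)).
  by rewrite /G -expRD; congr expR; ring.
have hv : expR v = G * expR (- (t * (u - v))).
  by rewrite /G -expRD; congr expR; ring.
have G0 : 0 < G by exact: expR_gt0.
have nz : (1 - t) * (u - v) != 0.
  by rewrite mulf_neq0 // ?subr_eq0 // eq_sym lt_eqF.
have e1 := expR_gt1Dx nz.
have e2 := expR_ge1Dx (- (t * (u - v))).
rewrite hu hv.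
have h1 : G * (1 + (1 - t) * (u - v)) < G * expR ((1 - t) * (u - v)) by rewrite ltr_pM2l.
have h2 : G * (1 + - (t * (u - v))) <= G * expR (- (t * (u - v))) by rewrite ler_pM2l.
have t1' : 0 <= 1 - t by rewrite subr_ge0 ltW.
have h1' : t * (G * (1 + (1 - t) * (u - v))) < t * (G * expR ((1 - t) * (u - v))) by rewrite ltr_pM2l.
have h2' := ler_wpM2l t1' h2.
apply: le_lt_trans (ltr_leD h1' h2').
rewrite le_eqVlt; apply/orP; left; apply/eqP; ring.
Qed.
End Scalar.
Section Scalar2.
Context {R : realType}.
Definition sgn (a : R) : R := if (0 < a) && (a < 1) then -1 else 1.

Lemma tangent_aux (a t : R) : a != 0 -> a != 1 ->
  exists c th u v, [/\ 0 < c, 0 < th < 1, (u == v) = (t == 0) &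
    sgn a * (expR t `^ a - 1 - a * (expR t - 1)) =
    c * (th * expR u + (1 - th) * expR v - expR (th * u + (1 - th) * v))].
Proof.
move=> a0 a1; rewrite -expRM /sgn.
have [a_lt0|a_gt0] := ltP a 0.
- have a01 : (0 < a) && (a < 1) = false by rewrite ltNge ltW.
  rewrite a01.
  have h1a : 0 < 1 - a by rewrite subr_gt0 (lt_trans a_lt0).
  exists (1 - a), (1 - a)^-1, (t * a), t; split => //.
  + rewrite invr_gt0 h1a /= invf_lt1 //; rewrite ltrBrDl; lra.
  + apply/idP/idP => [/eqP h|/eqP ->]; last by rewrite mul0r.
    have : (a - 1) * t = 0 by rewrite mulrBl mulrC h mul1r subrr.
    by move/eqP; rewrite mulf_eq0 subr_eq0 (negbTE a1) /= .
  + have -> : (1 - a)^-1 * (t * a) + (1 - (1 - a)^-1) * t = 0.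
      by field; rewrite gt_eqF.
    rewrite expR0; field; rewrite gt_eqF //.
- have a_gt0' : 0 < a by rewrite lt_neqAle eq_sym a0 a_gt0.
  have [a_lt1|a_ge1] := ltP a 1.
  + rewrite a_gt0' /=.
    exists 1, a, t, 0; split => //.
    * by rewrite a_gt0'.
    * rewrite mulr0 addr0 expR0 mulr1 mul1r (mulrC t a). lra.
  + have a_gt1 : 1 < a by rewrite lt_neqAle eq_sym a1 a_ge1.
    rewrite a_gt0' /=.
    exists a, a^-1, (t * a), 0; split => //.
    * by rewrite invr_gt0 a_gt0' /= invf_lt1.
    * by rewrite mulf_eq0 (negbTE a0) orbF.
    * have -> : a^-1 * (t * a) + (1 - a^-1) * 0 = t by field.
      by rewrite expR0; field.
Qed.

Lemma tangent_ge0 (a s : R) : a != 0 -> a != 1 -> 0 < s ->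
  0 <= sgn a * (s `^ a - 1 - a * (s - 1)).
Proof.
move=> a0 a1 s0; rewrite -(lnK s0).
have [c [th [u [v [c0 th01 _ ->]]]]] := tangent_aux a (ln s) a0 a1.
apply: mulr_ge0; [exact: ltW|rewrite subr_ge0; exact: amgm_le].
Qed.

Lemma tangent_eq0 (a s : R) : a != 0 -> a != 1 -> 0 < s ->
  sgn a * (s `^ a - 1 - a * (s - 1)) = 0 -> s = 1.
Proof.
move=> a0 a1 s0; rewrite -(lnK s0).
have [c [th [u [v [c0 th01 huv ->]]]]] := tangent_aux a (ln s) a0 a1.
have [uv|uv] := eqVneq u v.
  by move: huv; rewrite uv eqxx => /esym/eqP ->; rewrite expR0.
have := amgm_lt _ _ _ th01 uv; rewrite -subr_gt0 => h /eqP.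
by rewrite mulf_eq0 gt_eqF // gt_eqF.
Qed.
End Scalar2.
Section Pointwise.
Context {R : realType}.
Definition Pt (a m x y : R) : R :=
  sgn a * (x `^ a - m `^ a * y `^ a -
           a * m `^ (a - 1) * (x * y `^ (a - 1) - m * y `^ a)).

Lemma mul_powRm1 (y a : R) : 0 < y -> y * y `^ (a - 1) = y `^ a.
Proof.
move=> y0.
rewrite -{1}(powRr1 (ltW y0)) -powRD; first by congr (_ `^ _); ring.
by apply/implyP => _; rewrite gt_eqF.
Qed.

Lemma Pt_pos (a m x y : R) : a != 0 -> a != 1 -> 0 < m -> 0 < y -> 0 < x ->
  let s := x / (m * y) in
  Pt a m x y = m `^ a * y `^ a * (sgn a * (s `^ a - 1 - a * (s - 1))).
Proof.
move=> a0 a1 m0 y0 x0 s.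
have s0 : 0 < s by rewrite /s divr_gt0 // mulr_gt0.
have hx : x = s * m * y by rewrite /s; field; rewrite ?gt_eqF.
clearbody s.
rewrite /Pt.
have -> : x `^ a = s `^ a * m `^ a * y `^ a.
  rewrite hx powRM ?powRM //; try exact: ltW.
  by rewrite mulr_ge0 // ltW.
rewrite -(mul_powRm1 m a m0) -(mul_powRm1 y a y0) hx.
ring.
Qed.

Lemma Pt_ge0 (a m x y : R) : a != 0 -> a != 1 -> 0 < m -> 0 < y -> 0 <= x ->
  (a < 0 -> 0 < x) -> 0 <= Pt a m x y.
Proof.
move=> a0 a1 m0 y0 x0 hneg.
have [x_gt0|x_le0] := ltP 0 x.
  rewrite Pt_pos //; apply: mulr_ge0; first by rewrite mulr_ge0 ?powR_ge0.
  by apply: tangent_ge0 => //; rewrite divr_gt0 // mulr_gt0.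
have x00 : x = 0 by apply/eqP; rewrite eq_le x_le0 x0.
have a_gt0 : 0 < a.
  by rewrite ltNge; apply/negP => h; have := hneg; rewrite lt_neqAle a0 h x00 ltxx; move/(_ isT).
rewrite /Pt x00 powR0 ?mul0r ?sub0r //.
rewrite -(mul_powRm1 m a m0).
have -> : sgn a * (- (m * m `^ (a - 1) * y `^ a) - a * m `^ (a - 1) * (- (m * y `^ a)))
   = sgn a * (a - 1) * (m * m `^ (a - 1) * y `^ a) by ring.
rewrite mul_powRm1 //; apply: mulr_ge0; last by rewrite mulr_ge0 ?powR_ge0.
rewrite /sgn a_gt0 /=; have [a_lt1|a_ge1] := ltP a 1.
  by rewrite mulN1r oppr_ge0 subr_le0 ltW.
by rewrite mul1r subr_ge0.
Qed.

Lemma Pt_eq0 (a m x y : R) : a != 0 -> a != 1 -> 0 < m -> 0 < y -> 0 <= x ->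
  (a < 0 -> 0 < x) -> Pt a m x y = 0 -> x = m * y.
Proof.
move=> a0 a1 m0 y0 x0 hneg.
have [x_gt0|x_le0] := ltP 0 x.
  rewrite Pt_pos // => /eqP; rewrite mulf_eq0 mulf_eq0 (gt_eqF (powR_gt0 _ m0)) (gt_eqF (powR_gt0 _ y0)) /= => /eqP h.
  have spos : 0 < x / (m * y) by rewrite divr_gt0 // mulr_gt0.
  have hs := tangent_eq0 _ _ a0 a1 spos h.
  have -> : x = x / (m * y) * (m * y) by field; rewrite ?gt_eqF.
  by rewrite hs mul1r.
have x00 : x = 0 by apply/eqP; rewrite eq_le x_le0 x0.
have a_gt0 : 0 < a.
  by rewrite ltNge; apply/negP => h; have := hneg; rewrite lt_neqAle a0 h x00 ltxx; move/(_ isT).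
move=> /eqP; apply: contraTeq => _.
suff : 0 < Pt a m x y by move/gt_eqF => ->.
rewrite /Pt x00 powR0 ?mul0r ?sub0r //.
rewrite -(mul_powRm1 m a m0).
have -> : sgn a * (- (m * m `^ (a - 1) * y `^ a) - a * m `^ (a - 1) * (- (m * y `^ a)))
   = sgn a * (a - 1) * (m * m `^ (a - 1) * y `^ a) by ring.
rewrite mul_powRm1 //; apply: mulr_gt0; last by rewrite mulr_gt0 ?powR_gt0.
rewrite /sgn a_gt0 /=; have [a_lt1|a_ge1] := ltP a 1.
  by rewrite mulN1r oppr_gt0 subr_lt0.
by rewrite mul1r subr_gt0 lt_neqAle eq_sym a1.
Qed.
End Pointwise.
Section Integ.
Context {R : realType} {d : measure_display} {T : measurableType d}
  (mu : {measure set T -> \bar R}) (U : set T) (mU : measurable U).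
Local Open Scope ereal_scope.

Lemma int_zero_ae (f : T -> R) : measurable_fun U f ->
  (forall x, U x -> (0 <= f x)%R) -> \int[mu]_(x in U) (f x)%:E = 0 ->
  {ae mu, forall x, U x -> f x = 0%R}.
Proof.
move=> mf f0 i0.
have : \int[mu]_(x in U) `|(EFin \o f) x| = 0.
  rewrite -i0; apply: eq_integral => x /[1!inE] Ux /=.
  by rewrite ger0_norm // f0.
move/(ae_eq_integral_abs mu mU (proj2 (measurable_EFinP U f) mf)).
by apply: filterS => x H Ux; have := H Ux; move=> [->].
Qed.

Lemma ae_false : {ae mu, forall x, U x -> False} -> mu U = 0.
Proof.
move=> [N [mN N0 sN]].
apply: (subset_measure0 mU mN) => //.
by move=> x Ux; apply: sN => /=; move/(_ Ux).
Qed.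

Lemma ae_int_ge0 (f : T -> R) : mu.-integrable U (EFin \o f) ->
  {ae mu, forall x, U x -> (0 <= f x)%R} ->
  0 <= \int[mu]_(x in U) (f x)%:E /\
  (\int[mu]_(x in U) (f x)%:E = 0 -> {ae mu, forall x, U x -> f x = 0%R}).
Proof.
move=> /integrableP[mf _] hae.
have E : \int[mu]_(x in U) (f x)%:E = \int[mu]_(x in U) `|(EFin \o f) x|.
  have := @ae_eq_integral _ _ _ mu U (fun x => `|(EFin \o f) x|) (EFin \o f) mU mf.
  move=> H; apply: H; first exact: measurableT_comp (@abse_measurable _ setT) mf.
  by apply: filterS hae => x H Ux /=; rewrite ger0_norm // H.
split; first by rewrite E integral_ge0.
rewrite E => /(ae_eq_integral_abs mu mU mf).
by apply: filterS => x H Ux; have := H Ux; move=> [->].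
Qed.

Lemma int_pos (f rho : T -> R) : measurable_fun U f -> measurable_fun U rho ->
  (forall x, U x -> (0 <= f x)%R) ->
  (forall x, U x -> f x = 0%R -> rho x = 0%R) ->
  \int[mu]_(x in U) (rho x)%:E = 1 ->
  \int[mu]_(x in U) (f x)%:E != 0.
Proof.
move=> mf mr f0 fr i1; apply/eqP => /(int_zero_ae _ mf f0) hae.
have : \int[mu]_(x in U) (rho x)%:E = \int[mu]_(x in U) (cst 0%R x)%:E.
  apply: (@ae_eq_integral _ _ _ mu U (fun x => (cst 0%R x)%:E) (EFin \o rho) mU).
  - exact/measurable_EFinP.
  - exact/measurable_EFinP/measurable_cst.
  by apply: filterS hae => x H Ux; rewrite /= fr // H.
by rewrite i1 integral0 => /eqP; rewrite onee_eq0.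
Qed.

Lemma ge0_int_integrable (f : T -> R) : measurable_fun U f ->
  (forall x, U x -> (0 <= f x)%R) -> \int[mu]_(x in U) (f x)%:E < +oo ->
  mu.-integrable U (EFin \o f).
Proof.
move=> mf f0 fin; apply/integrableP; split; first exact/measurable_EFinP.
rewrite (le_lt_trans _ fin)// le_eqVlt; apply/orP; left; apply/eqP.
by apply: eq_integral => x /[1!inE] Ux /=; rewrite ger0_norm // f0.
Qed.

Lemma integrable_fineK (f : T -> R) : mu.-integrable U (EFin \o f) ->
  \int[mu]_(x in U) (f x)%:E = (fine (\int[mu]_(x in U) (f x)%:E))%:E.
Proof. by move=> fi; rewrite fineK //; exact: (integrable_fin_num mU fi). Qed.

End Integ.
Section Integ2.
Context {R : realType} {d : measure_display} {T : measurableType d}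
  (mu : {measure set T -> \bar R}) (U : set T) (mU : measurable U).
Local Open Scope ereal_scope.

Lemma intR_Z (k : R) {f : T -> R} : mu.-integrable U (EFin \o f) ->
  mu.-integrable U (EFin \o (fun x => k * f x)%R).
Proof.
move=> fi; apply: (eq_integrable mU _ _ _ (integrableZl mU k fi)).
by move=> x _; rewrite /= EFinM.
Qed.

Lemma intR_D {f g : T -> R} : mu.-integrable U (EFin \o f) ->
  mu.-integrable U (EFin \o g) ->
  mu.-integrable U (EFin \o (fun x => f x + g x)%R).
Proof.
move=> fi gi; apply: (eq_integrable mU _ _ _ (integrableD mU fi gi)).
by move=> x _; rewrite /= EFinD.
Qed.

Lemma intR_ZE (k : R) {f : T -> R} {I : R} : mu.-integrable U (EFin \o f) ->
  \int[mu]_(x in U) (f x)%:E = I%:E ->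
  \int[mu]_(x in U) ((k * f x)%R)%:E = (k * I)%:E.
Proof.
move=> fi fI.
rewrite (eq_integral (fun x => k%:E * (EFin \o f) x)); last first.
  by move=> x _; rewrite /= EFinM.
by rewrite integralZl // fI.
Qed.

Lemma intR_DE {f g : T -> R} {I J : R} : mu.-integrable U (EFin \o f) ->
  mu.-integrable U (EFin \o g) ->
  \int[mu]_(x in U) (f x)%:E = I%:E -> \int[mu]_(x in U) (g x)%:E = J%:E ->
  \int[mu]_(x in U) ((f x + g x)%R)%:E = (I + J)%:E.
Proof.
move=> fi gi fI gJ.
rewrite (eq_integral (fun x => (EFin \o f) x + (EFin \o g) x)); last first.
  by move=> x _; rewrite /= EFinD.
by rewrite integralD // fI gJ.
Qed.

Lemma int_lin3 (f1 f2 f3 : T -> R) (c1 c2 c3 I1 I2 I3 : R) :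
  mu.-integrable U (EFin \o f1) -> mu.-integrable U (EFin \o f2) ->
  mu.-integrable U (EFin \o f3) ->
  \int[mu]_(x in U) (f1 x)%:E = I1%:E -> \int[mu]_(x in U) (f2 x)%:E = I2%:E ->
  \int[mu]_(x in U) (f3 x)%:E = I3%:E ->
  mu.-integrable U (EFin \o (fun x => c1 * f1 x + c2 * f2 x + c3 * f3 x)%R) /\
  \int[mu]_(x in U) ((c1 * f1 x + c2 * f2 x + c3 * f3 x)%R)%:E =
    ((c1 * I1 + c2 * I2 + c3 * I3)%R)%:E.
Proof.
move=> i1 i2 i3 e1 e2 e3.
have j1 := intR_Z c1 i1; have j2 := intR_Z c2 i2; have j3 := intR_Z c3 i3.
have j12 := intR_D j1 j2.
split; first exact: intR_D j12 j3.
rewrite (intR_DE j12 j3 (intR_DE j1 j2 (intR_ZE c1 i1 e1) (intR_ZE c2 i2 e2))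
  (intR_ZE c3 i3 e3)) //.
Qed.
End Integ2.
Section LogIneq.
Context {R : realType}.

Lemma log_ineq (a Ar Br W m : R) : a != 0 -> a != 1 -> 0 < Ar -> 0 < W -> 0 < m ->
  Br = m * W -> 0 <= sgn a * (Ar - m `^ a * W) ->
  (- a^-1 * ln W <= (1 - a)^-1 * ln Br - (a * (1 - a))^-1 * ln Ar) /\
  (- a^-1 * ln W = (1 - a)^-1 * ln Br - (a * (1 - a))^-1 * ln Ar -> Ar = m `^ a * W).
Proof.
move=> a0 a1 A0 W0 m0 hB hs.
have ma0 : 0 < m `^ a by exact: powR_gt0.
have maW0 : 0 < m `^ a * W by exact: mulr_gt0.
have lnB : ln Br = ln m + ln W by rewrite hB lnM // ?posrE.
have lnmW : ln (m `^ a * W) = a * ln m + ln W by rewrite lnM ?posrE // ln_powR.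
have a1' : 1 - a != 0 by rewrite subr_eq0 eq_sym.
have diff : (1 - a)^-1 * ln Br - (a * (1 - a))^-1 * ln Ar - (- a^-1 * ln W) =
   (a * (1 - a))^-1 * (ln (m `^ a * W) - ln Ar).
  by rewrite lnB lnmW; field; rewrite a1' a0.
have cases : ((0 < (a * (1 - a))^-1) /\ Ar <= m `^ a * W) \/
             ((a * (1 - a))^-1 < 0 /\ m `^ a * W <= Ar).
  move: hs; rewrite /sgn; case: ifPn => [/andP[a_gt0 a_lt1]|h].
    rewrite mulN1r oppr_ge0 subr_le0 => h; left; split => //.
    by rewrite invr_gt0 mulr_gt0 // subr_gt0.
  rewrite mul1r subr_ge0 => h'; right; split => //.
  rewrite invr_lt0; move: h; rewrite negb_and -!leNgt => /orP[a_le0|a_ge1].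
    have a_lt0 : a < 0 by rewrite lt_neqAle a0 a_le0.
    by rewrite nmulr_rlt0 // subr_gt0 (lt_trans a_lt0).
  have a_gt1 : 1 < a by rewrite lt_neqAle eq_sym a1 a_ge1.
  by rewrite pmulr_rlt0 ?subr_lt0 // (lt_trans ltr01).
split.
  rewrite -subr_ge0 diff; case: cases => [[c0 h]|[c0 h]].
    apply: mulr_ge0; first exact: ltW.
    by rewrite subr_ge0 ler_ln ?posrE.
  apply: mulr_le0; first exact: ltW.
  by rewrite subr_le0 ler_ln ?posrE.
move=> /eqP; rewrite eq_sym -subr_eq0 diff mulf_eq0.
have -> : ((a * (1 - a))^-1 == 0) = false.
  by case: cases => [[c0 _]|[c0 _]]; [rewrite gt_eqF|rewrite lt_eqF].
rewrite /= subr_eq0 => /eqP h; apply: ln_inj; rewrite ?inE ?posrE //.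
Qed.
End LogIneq.
Section Dens.
Context {R : realType} {d : measure_display} {T : measurableType d}
  (mu : {measure set T -> \bar R}) (U : set T) (mU : measurable U).

Lemma epow_meas (a : R) (rho : T -> R) : measurable_fun U rho ->
  measurable_fun U (fun x => epow (rho x) a).
Proof.
move=> mr.
apply: (@measurableT_comp _ _ _ _ _ _ (fun r => epow r a) U rho) => //.
rewrite /epow; apply: measurable_fun_ifT.
- exact: measurable_fun_ltr.
- exact: measurableT_comp.
- exact: measurable_cst.
Qed.

Lemma epow_ge (a r : R) : a != 0%R -> (0 <= r)%R -> ((r `^ a)%:E <= epow r a)%E.
Proof.
move=> a0 r0; rewrite /epow; case: ifPn => // rp.
have -> : r = 0%R by apply/eqP; rewrite eq_le r0 andbT leNgt.
by rewrite powR0 //; case: ifPn => _; rewrite ?leey.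
Qed.

Lemma dens_powR_integrable (a : R) (rho : T -> R) : a != 0%R ->
  Lalpha mu U a rho -> mu.-integrable U (EFin \o (fun x => rho x `^ a)).
Proof.
move=> a0 [[mr r0 _] fin].
apply: ge0_int_integrable => //.
- exact: measurableT_comp (@measurable_powR _ a) mr.
- by move=> x _; exact: powR_ge0.
- apply: le_lt_trans fin; apply: ge0_le_integral => //.
  + by move=> x _; rewrite lee_fin powR_ge0.
  + exact/measurable_EFinP/(measurableT_comp (@measurable_powR _ a) mr).
  + exact: epow_meas.
  + by move=> x Ux; exact: epow_ge (r0 x Ux).
Qed.

Lemma renyi_int_eq (a : R) (rho : T -> R) : a != 0%R ->
  (forall x, U x -> (0 <= rho x)%R) ->
  (\int[mu]_(x in U `&` [set u | (0 < rho u)%R]) ((rho x) `^ a)%:E =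
  \int[mu]_(x in U) ((rho x) `^ a)%:E)%E.
Proof.
move=> a0 r0; rewrite integral_mkcondr; apply: eq_integral => x /[1!inE] Ux.
rewrite patchE; case: ifPn => // /negP; rewrite inE /= => rp.
have -> : rho x = 0%R by apply/eqP; rewrite eq_le r0 // andbT leNgt; apply/negP.
by rewrite powR0.
Qed.

Lemma dens_ae_pos (a : R) (rho : T -> R) : (a < 0)%R ->
  Lalpha mu U a rho -> {ae mu, forall x, U x -> (0 < rho x)%R}.
Proof.
move=> a_lt0 [[mr r0 _] fin].
set N := U `&` rho @^-1` `]-oo, 0%R].
have mN : measurable N by apply: mr => //; exact: measurable_itv.
have NU : N `<=` U by move=> x [].
have epN : forall x, N x -> epow (rho x) a = +oo%E.
  by move=> x [_ /=]; rewrite in_itv /= => h; rewrite /epow ltNge h /= a_lt0.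
have : (\int[mu]_(x in N) epow (rho x) a <= \int[mu]_(x in U) epow (rho x) a)%E.
  apply: ge0_subset_integral => //; first exact: epow_meas.
  move=> x Ux; rewrite /epow; case: ifPn => _; first by rewrite lee_fin powR_ge0.
  by case: ifPn.
rewrite (eq_integral (fun _ => +oo%E)); last by move=> x /[1!inE] /epN.
rewrite integral_cst // => H.
have muN : mu N = 0%E.
  apply/eqP; apply: contraTT fin => muN0; rewrite -leNgt.
  apply: le_trans H; rewrite gt0_mulye // lt0e muN0 /=; exact: measure_ge0.
exists N; split => // x /= /not_implyP [Ux] /negP; rewrite -leNgt => h.
by split => //=; rewrite in_itv.
Qed.

End Dens.
Section Core.
Context {R : realType} {d : measure_display} {T : measurableType d}
  (mu : {measure set T -> \bar R}) (U : set T) (mU : measurable U)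
  (a : R) (a0 : a != 0) (a1 : a != 1)
  (w : T -> R) (mw : measurable_fun U w) (wpos : forall x, U x -> 0 < w x)
  (C : R) (C0 : 0 < C) (hC : (\int[mu]_(x in U) (w x)%:E = C%:E)%E)
  (W : R) (hW : (\int[mu]_(x in U) (w x `^ a)%:E = W%:E)%E).

Let mwa b : measurable_fun U (fun x => w x `^ b).
Proof. exact: measurableT_comp (@measurable_powR _ b) mw. Qed.

Let iw : mu.-integrable U (EFin \o w).
Proof.
apply: (ge0_int_integrable mu U) => //; first by move=> x /wpos/ltW.
by rewrite hC ltry.
Qed.

Let iwa : mu.-integrable U (EFin \o (fun x => w x `^ a)).
Proof.
apply: (ge0_int_integrable mu U); first exact: mwa.
  by move=> x _; exact: powR_ge0.
by rewrite hW ltry.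
Qed.

Lemma rstar_int1 : (\int[mu]_(x in U) (w x / C)%:E = 1)%E.
Proof.
rewrite (eq_integral (fun x => (C^-1 * w x)%:E)); last by move=> x _; rewrite mulrC.
by rewrite (intR_ZE mu U mU C^-1 iw hC) mulVf // gt_eqF.
Qed.

Lemma mrstar : measurable_fun U (fun x => w x / C).
Proof. exact: measurable_funM mw (measurable_cst _). Qed.

Lemma W_pos : 0 < W.
Proof.
have W0 : 0 <= W.
  by rewrite -lee_fin -hW integral_ge0 // => x _; rewrite lee_fin powR_ge0.
rewrite lt_neqAle W0 andbT eq_sym; apply/eqP => W00.
have : (\int[mu]_(x in U) (w x `^ a)%:E != 0)%E.
  apply: (int_pos mu U mU _ (fun x => w x / C) (mwa a) mrstar).
  - by move=> x _; exact: powR_ge0.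
  - by move=> x Ux /powR_eq0_eq0 h; have := wpos x Ux; rewrite h ltxx.
  - exact: rstar_int1.
by rewrite hW W00 eqxx.
Qed.


Lemma B_fin (rho : T -> R) : Lalpha mu U a rho -> 1 < a ->
  (\int[mu]_(x in U) (w x `^ (a - 1) * rho x)%:E < +oo)%E.
Proof.
move=> H a_gt1; have [[mr r0 r1] fin] := H.
have iA := dens_powR_integrable mu U mU a rho a0 H.
set Ar := fine (\int[mu]_(x in U) (rho x `^ a)%:E).
have hA : (\int[mu]_(x in U) (rho x `^ a)%:E = Ar%:E)%E.
  exact: (integrable_fineK mu U mU).
have pt : forall x, U x -> w x `^ (a - 1) * rho x <= rho x `^ a + (a - 1) * w x `^ a.
  move=> x Ux.
  have neg : a < 0 -> 0 < rho x.
    by move=> h; exfalso; move: h; rewrite ltNge (ltW (lt_trans ltr01 a_gt1)).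
  have := Pt_ge0 a 1 (rho x) (w x) a0 a1 ltr01 (wpos x Ux) (r0 x Ux) neg.
  have sg1 : sgn a = 1.
    have h1 : (a < 1) = false by rewrite ltNge (ltW a_gt1).
    by rewrite /sgn h1 andbF.
  rewrite /Pt sg1 !powR1 !mul1r mulr1.
  rewrite subr_ge0 => h.
  have rw0 : 0 <= rho x * w x `^ (a - 1) by rewrite mulr_ge0 ?powR_ge0 ?r0.
  rewrite mulrC; apply: le_trans (_ : a * (rho x * w x `^ (a - 1)) <= _).
    by rewrite ler_peMl // ltW.
  move: h; rewrite lerBrDr; set z := rho x * w x `^ (a - 1) => h.
  have : a * (z - w x `^ a) + w x `^ a <= rho x `^ a by [].
  by move=> h'; lra.
have le1 : (\int[mu]_(x in U) (w x `^ (a - 1) * rho x)%:E <=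
    \int[mu]_(x in U) ((rho x `^ a + (a - 1) * w x `^ a)%R)%:E)%E.
  apply: ge0_le_integral => //.
  - by move=> x Ux; rewrite lee_fin mulr_ge0 ?powR_ge0 ?r0.
  - by apply/measurable_EFinP; apply: measurable_funM => //; exact: mwa.
  - apply/measurable_EFinP; apply: measurable_funD.
      exact: measurableT_comp (@measurable_powR _ a) mr.
    by apply: measurable_funM => //; exact: mwa.
  all: try by move=> x Ux; rewrite lee_fin; exact: pt.
apply: le_lt_trans le1 _.
rewrite (eq_integral (fun x => ((1 * rho x `^ a + (a - 1) * w x `^ a + 0 * w x `^ a)%R)%:E)); last first.
  by move=> x _; rewrite mul1r mul0r addr0.
have := int_lin3 mu U mU (fun x => rho x `^ a) (fun x => w x `^ a)
  (fun x => w x `^ a) 1 (a - 1) 0 _ _ _ iA iwa iwa hA hW hW.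
move=> [_ ->]; exact: ltry.
Qed.

Lemma core (rho : T -> R) : Lalpha mu U a rho ->
  exists Ar, 0 < Ar /\
  (\int[mu]_(x in U `&` [set u | (0 < rho u)%R]) ((rho x) `^ a)%:E = Ar%:E)%E /\
  (((\int[mu]_(x in U) (w x `^ (a - 1) * rho x)%:E = +oo)%E /\ a < 1) \/
   exists Br, 0 < Br /\ (\int[mu]_(x in U) (w x `^ (a - 1) * rho x)%:E = Br%:E)%E /\
     (- a^-1 * ln W <= (1 - a)^-1 * ln Br - (a * (1 - a))^-1 * ln Ar) /\
     (- a^-1 * ln W = (1 - a)^-1 * ln Br - (a * (1 - a))^-1 * ln Ar ->
        {ae mu, forall x, U x -> rho x = w x / C})).
Proof.
move=> H; have [[mr r0 r1] fin] := H.
have iA := dens_powR_integrable mu U mU a rho a0 H.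
set Ar := fine (\int[mu]_(x in U) (rho x `^ a)%:E).
have hA : (\int[mu]_(x in U) (rho x `^ a)%:E = Ar%:E)%E.
  exact: (integrable_fineK mu U mU).
have mrA : measurable_fun U (fun x => rho x `^ a).
  exact: measurableT_comp (@measurable_powR _ a) mr.
have A0 : 0 < Ar.
  have Age0 : 0 <= Ar.
    by rewrite -lee_fin -hA integral_ge0 // => x _; rewrite lee_fin powR_ge0.
  rewrite lt_neqAle Age0 andbT eq_sym; apply/eqP => A00.
  have : (\int[mu]_(x in U) (rho x `^ a)%:E != 0)%E.
    apply: (int_pos mu U mU _ rho mrA mr) => //.
    - by move=> x _; exact: powR_ge0.
    - by move=> x Ux /powR_eq0_eq0.
  by rewrite hA A00 eqxx.
exists Ar; split => //; split; first by rewrite renyi_int_eq.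
have mB : measurable_fun U (fun x => w x `^ (a - 1) * rho x).
  by apply: measurable_funM => //; exact: mwa.
have B0 : forall x, U x -> 0 <= w x `^ (a - 1) * rho x.
  by move=> x Ux; rewrite mulr_ge0 ?powR_ge0 ?r0.
have [Binf|Bfin] := eqVneq (\int[mu]_(x in U) (w x `^ (a - 1) * rho x)%:E)%E +oo%E.
  left; split => //.
  have [a_lt1|a_ge1] := ltP a 1 => //.
  have a_gt1 : 1 < a by rewrite lt_neqAle eq_sym a1 a_ge1.
  by have := B_fin rho H a_gt1; rewrite Binf ltxx.
right.
have Blt : (\int[mu]_(x in U) (w x `^ (a - 1) * rho x)%:E < +oo)%E by rewrite ltey.
have iB := ge0_int_integrable mu U _ mB B0 Blt.
set Br := fine (\int[mu]_(x in U) (w x `^ (a - 1) * rho x)%:E).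
have hB : (\int[mu]_(x in U) (w x `^ (a - 1) * rho x)%:E = Br%:E)%E.
  exact: (integrable_fineK mu U mU).
have Bpos : 0 < Br.
  have Bge0 : 0 <= Br.
    by rewrite -lee_fin -hB integral_ge0 // => x Ux; rewrite lee_fin B0.
  rewrite lt_neqAle Bge0 andbT eq_sym; apply/eqP => B00.
  have : (\int[mu]_(x in U) (w x `^ (a - 1) * rho x)%:E != 0)%E.
    apply: (int_pos mu U mU _ rho mB mr) => //.
    move=> x Ux /eqP; rewrite mulf_eq0 gt_eqF ?powR_gt0 ?wpos //=.
    by move/eqP.
  by rewrite hB B00 eqxx.
exists Br; split => //; split => //.
have W0 := W_pos.
set m := Br / W.
have m0 : 0 < m by rewrite divr_gt0.
have hBm : Br = m * W by rewrite /m; field; rewrite gt_eqF.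
pose P x := Pt a m (rho x) (w x).
have hP : forall x, P x = sgn a * (rho x `^ a) +
    (sgn a * (- m `^ a + a * m `^ (a - 1) * m)) * w x `^ a +
    (- sgn a * a * m `^ (a - 1)) * (w x `^ (a - 1) * rho x).
  by move=> x; rewrite /P /Pt; ring.
have [iP IP] := int_lin3 mu U mU (fun x => rho x `^ a) (fun x => w x `^ a)
  (fun x => w x `^ (a - 1) * rho x) (sgn a)
  (sgn a * (- m `^ a + a * m `^ (a - 1) * m)) (- sgn a * a * m `^ (a - 1))
  _ _ _ iA iwa iB hA hW hB.
have iP' : mu.-integrable U (EFin \o P).
  by apply: (eq_integrable mU _ _ _ iP) => x _ /=; rewrite hP.
have IP' : (\int[mu]_(x in U) (P x)%:E = (sgn a * (Ar - m `^ a * W))%:E)%E.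
  rewrite (eq_integral (fun x => ((sgn a * (rho x `^ a) +
    (sgn a * (- m `^ a + a * m `^ (a - 1) * m)) * w x `^ a +
    (- sgn a * a * m `^ (a - 1)) * (w x `^ (a - 1) * rho x))%R)%:E)); last first.
    by move=> x _; rewrite hP.
  by rewrite IP hBm; congr EFin; ring.
have aepos : {ae mu, forall x, U x -> (a < 0 -> 0 < rho x)}.
  have [a_lt0|a_ge0] := ltP a 0.
    by apply: filterS (dens_ae_pos mu U mU a rho a_lt0 H) => x h Ux _; exact: h.
  by apply: aeW.
have aeP : {ae mu, forall x, U x -> 0 <= P x}.
  apply: filterS aepos => x h Ux.
  exact: Pt_ge0 _ _ _ _ a0 a1 m0 (wpos x Ux) (r0 x Ux) (h Ux).
have [IP0 IPeq] := ae_int_ge0 mu U mU P iP' aeP.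
have hs : 0 <= sgn a * (Ar - m `^ a * W) by rewrite -lee_fin -IP'.
have [Hle Heq] := log_ineq _ _ _ _ _ a0 a1 A0 W0 m0 hBm hs.
split => // /Heq hArW.
have IP0' : (\int[mu]_(x in U) (P x)%:E = 0)%E by rewrite IP' hArW subrr mulr0.
have aeP0 := IPeq IP0'.
have aerho : {ae mu, forall x, U x -> rho x = m * w x}.
  apply: filterS2 aepos aeP0 => x h1 h2 Ux.
  exact: Pt_eq0 _ _ _ _ a0 a1 m0 (wpos x Ux) (r0 x Ux) (h1 Ux) (h2 Ux).
have mC : m * C = 1.
  have : (\int[mu]_(x in U) (rho x)%:E = \int[mu]_(x in U) ((m * w x)%R)%:E)%E.
    apply: (@ae_eq_integral _ _ _ mu U (fun x => ((m * w x)%R)%:E) (EFin \o rho) mU).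
    - exact/measurable_EFinP.
    - by apply/measurable_EFinP; apply: measurable_funM => //; exact: measurable_cst.
    - by apply: filterS aerho => x h Ux; rewrite /= h.
  by rewrite r1 (intR_ZE mu U mU m iw hC) => -[<-].
apply: filterS aerho => x h Ux; rewrite h // -[w x / C]mul1r -mC.
by field; rewrite gt_eqF.
Qed.

Lemma core_star : Lalpha mu U a (fun x => w x / C) /\
  exists Ar Br, [/\ 0 < Ar, 0 < Br,
  (\int[mu]_(x in U `&` [set u | (0 < w u / C)%R]) ((w x / C) `^ a)%:E = Ar%:E)%E,
  (\int[mu]_(x in U) (w x `^ (a - 1) * (w x / C))%:E = Br%:E)%E &
  - a^-1 * ln W = (1 - a)^-1 * ln Br - (a * (1 - a))^-1 * ln Ar].
Proof.
have W0 := W_pos.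
set c1 := C^-1 `^ a.
have c10 : 0 < c1 by rewrite powR_gt0 // invr_gt0.
have hpow : forall x, U x -> (w x / C) `^ a = c1 * w x `^ a.
  move=> x Ux; rewrite powRM; [by rewrite mulrC| exact: ltW (wpos x Ux)|].
  by rewrite invr_ge0 ltW.
have rpos : forall x, U x -> 0 < w x / C by move=> x Ux; rewrite divr_gt0 // wpos.
have iA : (\int[mu]_(x in U) ((w x / C) `^ a)%:E = (c1 * W)%:E)%E.
  rewrite (eq_integral (fun x => ((c1 * w x `^ a)%R)%:E)); last first.
    by move=> x /[1!inE] Ux; rewrite hpow.
  exact: (intR_ZE mu U mU c1 iwa hW).
split.
  split.
    split; [exact: mrstar | by move=> x Ux; exact: ltW (rpos x Ux) | exact: rstar_int1].
  rewrite (eq_integral (fun x => ((w x / C) `^ a)%:E)); first by rewrite iA ltry.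
  by move=> x /[1!inE] Ux; rewrite /epow rpos.
exists (c1 * W), (C^-1 * W); split.
- exact: mulr_gt0.
- by rewrite mulr_gt0 // invr_gt0.
- by rewrite renyi_int_eq // => x Ux; exact: ltW (rpos x Ux).
- rewrite (eq_integral (fun x => ((C^-1 * w x `^ a)%R)%:E)); last first.
    move=> x /[1!inE] Ux; rewrite mulrA (mulrC _ (w x)) mul_powRm1 ?wpos //.
    by rewrite mulrC.
  exact: (intR_ZE mu U mU C^-1 iwa hW).
- have lnc1 : ln c1 = - a * ln C by rewrite /c1 ln_powR lnV ?posrE // mulrN mulNr.
  have e1 : ln (C^-1 * W) = - ln C + ln W.
    by rewrite lnM ?posrE ?invr_gt0 // lnV ?posrE.
  have e2 : ln (c1 * W) = - a * ln C + ln W by rewrite lnM ?posrE // lnc1.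
  rewrite e1 e2.
  have a1' : 1 - a != 0 by rewrite subr_eq0 eq_sym.
  by field; rewrite a1' a0.
Qed.

End Core.
Section Final.
Context {R : realType} {d : measure_display} {T : measurableType d}
  (mu : {measure set T -> \bar R}) (U : set T) (mU : measurable U).

Lemma lne_pos (r : R) : 0 < r -> lne r%:E = (ln r)%:E.
Proof. by move=> r0; rewrite /lne leNgt r0. Qed.

Lemma mexp (c : R) (g : T -> R) : measurable_fun U g ->
  measurable_fun U (fun x => expR (c * g x)).
Proof.
move=> mg; apply: (@measurableT_comp _ _ _ _ _ _ expR U (fun x => c * g x)).
  exact: measurable_expR.
exact: measurable_funM (measurable_cst _) mg.
Qed.

Lemma C_facts (w : T -> R) : measurable_fun U w -> (forall x, U x -> 0 < w x) ->
  (0 < mu U)%E -> (\int[mu]_(x in U) (w x)%:E < +oo)%E ->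
  0 < fine (\int[mu]_(x in U) (w x)%:E) /\
  (\int[mu]_(x in U) (w x)%:E = (fine (\int[mu]_(x in U) (w x)%:E))%:E)%E.
Proof.
move=> mw wpos hU fin.
have ge0 : (0 <= \int[mu]_(x in U) (w x)%:E)%E.
  by apply: integral_ge0 => x Ux; rewrite lee_fin; exact: ltW (wpos x Ux).
have fn : (\int[mu]_(x in U) (w x)%:E)%E \is a fin_num by rewrite ge0_fin_numE.
split; last by rewrite fineK.
apply: fine_gt0; rewrite fin andbT lt_neqAle ge0 andbT eq_sym; apply/eqP => i0.
have := int_zero_ae mu U mU w mw (fun x Ux => ltW (wpos x Ux)) i0.
move=> hae; have : {ae mu, forall x, U x -> False}.
  by apply: filterS hae => x h Ux; have := wpos x Ux; rewrite h // ltxx.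
by move/(ae_false mu U mU) => h; move: hU; rewrite h ltxx.
Qed.

End Final.
Theorem lemma2 (R : realType) (d : measure_display) (T : measurableType d)
  (mu : {measure set T -> \bar R}) (U : set T)
  (mU : measurable U) (hU : (0 < mu U)%E)
  (beta gamma : R) (hb : beta != 0) (hg : gamma != 0) (hbg : beta < gamma) :
  (* (i) *)
  (forall g : T -> R, measurable_fun U g ->
     (exists M : R, forall u, U u -> M <= g u) ->
     (\int[mu]_(x in U) (expR (beta * g x))%:E < +oo)%E ->
     (\int[mu]_(x in U) (expR (- (gamma - beta) * g x))%:E < +oo)%E ->
     let a := 1 - gamma / (gamma - beta) in
     let obj := fun rho : T -> R =>
       ((gamma^-1)%:E * lne (\int[mu]_(x in U) (expR (gamma * g x) * rho x)%:E)
        - ((gamma - beta)^-1)%:E * renyi mu U a rho)%E in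
     let rhostar := fun u => expR (- (gamma - beta) * g u) /
        fine (\int[mu]_(x in U) (expR (- (gamma - beta) * g x))%:E) in
     ((beta^-1)%:E * lne (\int[mu]_(x in U) (expR (beta * g x))%:E)
        = ereal_inf [set obj rho | rho in Lalpha mu U a])%E
     /\ Lalpha mu U a rhostar
     /\ obj rhostar = ereal_inf [set obj rho | rho in Lalpha mu U a]
     /\ (forall rho, Lalpha mu U a rho ->
           obj rho = ereal_inf [set obj rho | rho in Lalpha mu U a] ->
           {ae mu, forall u, U u -> rho u = rhostar u}))
  /\
  (* (ii) *)
  (forall h : T -> R, measurable_fun U h ->
     (exists M : R, forall u, U u -> h u <= M) ->
     (\int[mu]_(x in U) (expR (gamma * h x))%:E < +oo)%E ->
     (\int[mu]_(x in U) (expR ((gamma - beta) * h x))%:E < +oo)%E ->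
     let a := gamma / (gamma - beta) in
     let obj := fun rho : T -> R =>
       ((beta^-1)%:E * lne (\int[mu]_(x in U) (expR (beta * h x) * rho x)%:E)
        + ((gamma - beta)^-1)%:E * renyi mu U a rho)%E in
     let rhostar := fun u => expR ((gamma - beta) * h u) /
        fine (\int[mu]_(x in U) (expR ((gamma - beta) * h x))%:E) in
     ((gamma^-1)%:E * lne (\int[mu]_(x in U) (expR (gamma * h x))%:E)
        = ereal_sup [set obj rho | rho in Lalpha mu U a])%E
     /\ Lalpha mu U a rhostar
     /\ obj rhostar = ereal_sup [set obj rho | rho in Lalpha mu U a]
     /\ (forall rho, Lalpha mu U a rho ->
           obj rho = ereal_sup [set obj rho | rho in Lalpha mu U a] ->
           {ae mu, forall u, U u -> rho u = rhostar u})).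
Proof.
have kpos : 0 < gamma - beta by rewrite subr_gt0.
have k0 : gamma - beta != 0 by rewrite gt_eqF.
split.
- move=> g mg _ hint1 hint2 a obj rhostar.
  pose w := fun x => expR (- (gamma - beta) * g x).
  have mw : measurable_fun U w by exact: mexp.
  have wpos : forall x, U x -> 0 < w x by move=> x _; exact: expR_gt0.
  have [C0 hC] := C_facts mu U mU w mw wpos hU hint2.
  set C := fine (\int[mu]_(x in U) (w x)%:E)%E in C0 hC.
  have ha : a = - beta / (gamma - beta) by rewrite /a; field.
  have a0 : a != 0 by rewrite ha mulf_neq0 ?oppr_eq0 ?invr_eq0.
  have a1 : a != 1.
    rewrite ha; apply/eqP => h.
    have h2 : - beta = gamma - beta by rewrite -[RHS]mul1r -h divfK.
    have g0 : gamma = 0 by lra.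
    by rewrite g0 eqxx in hg.
  have hwa : forall x, w x `^ a = expR (beta * g x).
    by move=> x; rewrite /w -expRM; congr expR; rewrite ha; field.
  have hwa1 : forall x, w x `^ (a - 1) = expR (gamma * g x).
    by move=> x; rewrite /w -expRM; congr expR; rewrite ha; field.
  have mb : measurable_fun U (fun x => expR (beta * g x)) by exact: mexp.
  have [W0 hW'] := C_facts mu U mU _ mb (fun x _ => expR_gt0 _) hU hint1.
  set W := fine (\int[mu]_(x in U) (expR (beta * g x))%:E)%E in W0 hW'.
  have hW : (\int[mu]_(x in U) (w x `^ a)%:E = W%:E)%E.
    by rewrite -hW'; apply: eq_integral => x _; rewrite hwa.
  have hobjB : forall rho : T -> R,
      (\int[mu]_(x in U) (expR (gamma * g x) * rho x)%:E =
       \int[mu]_(x in U) (w x `^ (a - 1) * rho x)%:E)%E.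
    by move=> rho; apply: eq_integral => x _; rewrite hwa1.
  have hrs : rhostar = (fun x => w x / C) by [].
  have hLHS : ((beta^-1)%:E * lne (\int[mu]_(x in U) (expR (beta * g x))%:E) =
      ((- a^-1 * ln W) / (gamma - beta))%:E)%E.
    rewrite hW' lne_pos // -EFinM; congr EFin; rewrite ha; field.
    by rewrite hb k0.
  have hobj : forall rho Ar Br, 0 < Ar -> 0 < Br ->
      (\int[mu]_(x in U `&` [set u | (0 < rho u)%R]) ((rho x) `^ a)%:E = Ar%:E)%E ->
      (\int[mu]_(x in U) (w x `^ (a - 1) * rho x)%:E = Br%:E)%E ->
      obj rho = ((((1 - a)^-1 * ln Br - (a * (1 - a))^-1 * ln Ar)) / (gamma - beta))%:E.
    move=> rho Ar Br A0 B0 HA HB.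
    rewrite /obj /renyi hobjB HB HA !lne_pos // -!EFinM -EFinB; congr EFin.
    rewrite ha; field.
    by rewrite k0 hb andbT /= opprK subrK.
  have gpos_of : a < 1 -> 0 < gamma.
    rewrite ha => h.
    have : 0 < 1 - - beta / (gamma - beta) by rewrite subr_gt0.
    have -> : 1 - - beta / (gamma - beta) = gamma / (gamma - beta) by field.
    by rewrite pmulr_lgt0 ?invr_gt0.
  have hobjinf : forall rho Ar, 0 < Ar -> a < 1 ->
      (\int[mu]_(x in U `&` [set u | (0 < rho u)%R]) ((rho x) `^ a)%:E = Ar%:E)%E ->
      (\int[mu]_(x in U) (w x `^ (a - 1) * rho x)%:E = +oo)%E ->
      obj rho = +oo%E.
    move=> rho Ar A0 alt1 HA HB.
    rewrite /obj /renyi hobjB HB HA !lne_pos // /= gt0_muley ?lte_fin ?invr_gt0 ?gpos_of //.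
  have [Lst [Ar [Br [A0 B0 HA HB Heq]]]] :=
    core_star mu U mU a a0 a1 w mw wpos C C0 hC W hW.
  have objst : obj rhostar =
      ((beta^-1)%:E * lne (\int[mu]_(x in U) (expR (beta * g x))%:E))%E.
    by rewrite hrs (hobj _ Ar Br) // hLHS -Heq.
  have lb : forall rho, Lalpha mu U a rho ->
      ((beta^-1)%:E * lne (\int[mu]_(x in U) (expR (beta * g x))%:E) <= obj rho)%E.
    move=> rho Hr.
    have [Ar' [A0' [HA' [[Binf alt1]|[Br' [B0' [HB' [Hle _]]]]]]]] :=
      core mu U mU a a0 a1 w mw wpos C C0 hC W hW rho Hr.
      by rewrite (hobjinf rho Ar') // leey.
    rewrite (hobj rho Ar' Br') // hLHS lee_fin ler_pM2r ?invr_gt0 //.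
  have infE : ereal_inf [set obj rho | rho in Lalpha mu U a] =
      ((beta^-1)%:E * lne (\int[mu]_(x in U) (expR (beta * g x))%:E))%E.
    apply/eqP; rewrite eq_le; apply/andP; split.
      by rewrite -objst; apply: ereal_inf_lbound; exists rhostar.
    by apply/ereal_infP => y [rho Hr <-]; exact: lb.
  split; first by rewrite infE.
  split; first by rewrite hrs.
  split; first by rewrite objst infE.
  move=> rho Hr; rewrite infE => Hobj.
  have [Ar' [A0' [HA' [[Binf alt1]|[Br' [B0' [HB' [Hle Hae]]]]]]]] :=
    core mu U mU a a0 a1 w mw wpos C C0 hC W hW rho Hr.
    by move: Hobj; rewrite (hobjinf rho Ar') // hLHS.
  apply: Hae; move: Hobj; rewrite (hobj rho Ar' Br') // hLHS => -[].
  move/(congr1 (fun z => z * (gamma - beta))); rewrite !divfK //.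
- move=> h mh _ hint1 hint2 a obj rhostar.
  pose w := fun x => expR ((gamma - beta) * h x).
  have mw : measurable_fun U w by exact: mexp.
  have wpos : forall x, U x -> 0 < w x by move=> x _; exact: expR_gt0.
  have [C0 hC] := C_facts mu U mU w mw wpos hU hint2.
  set C := fine (\int[mu]_(x in U) (w x)%:E)%E in C0 hC.
  have ha : a = gamma / (gamma - beta) by [].
  have a0 : a != 0 by rewrite ha mulf_neq0 ?invr_eq0.
  have a1 : a != 1.
    rewrite ha; apply/eqP => hh.
    have h2 : gamma = gamma - beta by rewrite -[RHS]mul1r -hh divfK.
    have b0 : beta = 0 by lra.
    by rewrite b0 eqxx in hb.
  have hwa : forall x, w x `^ a = expR (gamma * h x).
    by move=> x; rewrite /w -expRM; congr expR; rewrite ha; field.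
  have hwa1 : forall x, w x `^ (a - 1) = expR (beta * h x).
    by move=> x; rewrite /w -expRM; congr expR; rewrite ha; field.
  have mb : measurable_fun U (fun x => expR (gamma * h x)) by exact: mexp.
  have [W0 hW'] := C_facts mu U mU _ mb (fun x _ => expR_gt0 _) hU hint1.
  set W := fine (\int[mu]_(x in U) (expR (gamma * h x))%:E)%E in W0 hW'.
  have hW : (\int[mu]_(x in U) (w x `^ a)%:E = W%:E)%E.
    by rewrite -hW'; apply: eq_integral => x _; rewrite hwa.
  have hobjB : forall rho : T -> R,
      (\int[mu]_(x in U) (expR (beta * h x) * rho x)%:E =
       \int[mu]_(x in U) (w x `^ (a - 1) * rho x)%:E)%E.
    by move=> rho; apply: eq_integral => x _; rewrite hwa1.
  have hrs : rhostar = (fun x => w x / C) by [].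
  have hLHS : ((gamma^-1)%:E * lne (\int[mu]_(x in U) (expR (gamma * h x))%:E) =
      ((- (- a^-1 * ln W)) / (gamma - beta))%:E)%E.
    rewrite hW' lne_pos // -EFinM; congr EFin; rewrite ha; field.
    by rewrite k0 hg.
  have hobj : forall rho Ar Br, 0 < Ar -> 0 < Br ->
      (\int[mu]_(x in U `&` [set u | (0 < rho u)%R]) ((rho x) `^ a)%:E = Ar%:E)%E ->
      (\int[mu]_(x in U) (w x `^ (a - 1) * rho x)%:E = Br%:E)%E ->
      obj rho = ((- ((1 - a)^-1 * ln Br - (a * (1 - a))^-1 * ln Ar)) / (gamma - beta))%:E.
    move=> rho Ar Br A0 B0 HA HB.
    rewrite /obj /renyi hobjB HB HA !lne_pos // -!EFinM -EFinD; congr EFin.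
    rewrite ha; field.
    have hh : gamma - beta - gamma != 0 by rewrite addrAC subrr sub0r oppr_eq0.
    by rewrite k0 hg hb hh.
  have bneg_of : a < 1 -> beta < 0.
    rewrite ha => hh.
    have : 0 < 1 - gamma / (gamma - beta) by rewrite subr_gt0.
    have -> : 1 - gamma / (gamma - beta) = - beta / (gamma - beta) by field.
    by rewrite pmulr_lgt0 ?invr_gt0 // oppr_gt0.
  have hobjinf : forall rho Ar, 0 < Ar -> a < 1 ->
      (\int[mu]_(x in U `&` [set u | (0 < rho u)%R]) ((rho x) `^ a)%:E = Ar%:E)%E ->
      (\int[mu]_(x in U) (w x `^ (a - 1) * rho x)%:E = +oo)%E ->
      obj rho = -oo%E.
    move=> rho Ar A0 alt1 HA HB.
    rewrite /obj /renyi hobjB HB HA !lne_pos // /= lt0_muley ?lte_fin ?invr_lt0 ?bneg_of //.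
  have [Lst [Ar [Br [A0 B0 HA HB Heq]]]] :=
    core_star mu U mU a a0 a1 w mw wpos C C0 hC W hW.
  have objst : obj rhostar =
      ((gamma^-1)%:E * lne (\int[mu]_(x in U) (expR (gamma * h x))%:E))%E.
    by rewrite hrs (hobj _ Ar Br) // hLHS -Heq.
  have ub : forall rho, Lalpha mu U a rho ->
      (obj rho <= (gamma^-1)%:E * lne (\int[mu]_(x in U) (expR (gamma * h x))%:E))%E.
    move=> rho Hr.
    have [Ar' [A0' [HA' [[Binf alt1]|[Br' [B0' [HB' [Hle _]]]]]]]] :=
      core mu U mU a a0 a1 w mw wpos C C0 hC W hW rho Hr.
      by rewrite (hobjinf rho Ar') // leNye.
    by rewrite (hobj rho Ar' Br') // hLHS lee_fin ler_pM2r ?invr_gt0 // lerN2.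
  have supE : ereal_sup [set obj rho | rho in Lalpha mu U a] =
      ((gamma^-1)%:E * lne (\int[mu]_(x in U) (expR (gamma * h x))%:E))%E.
    apply/eqP; rewrite eq_le; apply/andP; split.
      by apply/ereal_supP => y [rho Hr <-]; exact: ub.
    by rewrite -objst; apply: ereal_sup_ubound; exists rhostar.
  split; first by rewrite supE.
  split; first by rewrite hrs.
  split; first by rewrite objst supE.
  move=> rho Hr; rewrite supE => Hobj.
  have [Ar' [A0' [HA' [[Binf alt1]|[Br' [B0' [HB' [Hle Hae]]]]]]]] :=
    core mu U mU a a0 a1 w mw wpos C C0 hC W hW rho Hr.
    by move: Hobj; rewrite (hobjinf rho Ar') // hLHS.
  apply: Hae; move: Hobj; rewrite (hobj rho Ar' Br') // hLHS => -[].
  move/(congr1 (fun z => - (z * (gamma - beta)))); rewrite !divfK // !opprK.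
  by move=> ->.
Qed.
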